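(* Let $n\ge 1$ and let $P_n$ be the path on the $n$ vertices $v_1v_2\cdots v_n$. Let $D$ be any dominating set of $P_n$ of minimum cardinality $\gamma(P_n)$, and let $\mathcal{C}_D(P_n)=\sum_{u\in D}\deg_{P_n}(u)$. Then: (i) if $n=3k$ for a positive integer $k$, then $\mathcal{C}_D(P_n)=2k$; (ii) if $n=3k+1$ for an integer $k\ge 0$, then $2k\le \mathcal{C}_D(P_n)\le 2k+2$; (iii) if $n=3k+2$ for an integer $k\ge 0$, then $2k+1\le \mathcal{C}_D(P_n)\le 2k+2$.
   Context: All graphs are finite and simple. A set $D\subseteq V(G)$ is a dominating set of $G$ if every vertex of $V(G)\setminus D$ has a neighbor in $D$. The domination number $\gamma(G)$ is the minimum cardinality of a dominating set, and a dominating set of cardinality $\gamma(G)$ is called a $\gamma$-set. For $D\subseteq V(G)$, the domination cover number (covering number) of $D$ is $\mathcal{C}_D(G)=\sum_{u\in D}\deg_G(u)$. *)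

(* Defs.v *)
From mathcomp Require Import all_boot.
Set Implicit Arguments. Unset Strict Implicit. Unset Printing Implicit Defensive.

Definition dominating (T : finType) (G : rel T) (D : {set T}) : bool :=
  [forall x, (x \in D) || [exists y in D, G x y]].

(* domination number: minimum cardinality of a dominating set
   (the whole vertex set is dominating, so #|T| is a valid start value). *)
Definition domination_number (T : finType) (G : rel T) : nat :=
  \big[minn/#|T|]_(D : {set T} | dominating G D) #|D|.

Definition gamma_set (T : finType) (G : rel T) (D : {set T}) : bool :=
  dominating G D && (#|D| == domination_number G).

Definition deg (T : finType) (G : rel T) (u : T) : nat := #|[set v | G u v]|.

Definition cover_number (T : finType) (G : rel T) (D : {set T}) : nat :=
  \sum_(u in D) deg G u.

(* path P_n on vertices 0,...,n-1 (v_1..v_n), i adjacent to i+1 *)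
Definition path_graph (n : nat) : rel 'I_n :=
  fun i j => (i.+1 == j :> nat) || (j.+1 == i :> nat).
Arguments path_graph n : clear implicits.

(* Main.v *)
Require Import Defs.
From mathcomp Require Import all_boot.
From mathcomp Require Import zify.

Lemma bigmin_seq_le (I : eqType) (s : seq I) (F : I -> nat) x0 j :
  j \in s -> \big[minn/x0]_(i <- s) F i <= F j.
Proof.
elim: s => [|a s IH] //= ; rewrite in_cons big_cons => /orP [/eqP ->|js].
  exact: geq_minl.
exact: leq_trans (geq_minr _ _) (IH js).
Qed.

Lemma bigmin_le (I : finType) (P : pred I) (F : I -> nat) x0 j :
  P j -> \big[minn/x0]_(i | P i) F i <= F j.
Proof.
move=> Pj; rewrite -big_filter; apply: bigmin_seq_le.
by rewrite mem_filter Pj mem_index_enum.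
Qed.

Lemma path_deg_le2 n (u : 'I_n) : deg (path_graph n) u <= 2.
Proof.
case: n u => [[]//|n] u.
rewrite /deg.
have H : [set v | path_graph n.+1 u v] \subset [set inord u.+1; inord u.-1].
  apply/subsetP => v; rewrite !inE /path_graph => /orP [] /eqP E;
  apply/orP; [left|right]; apply/eqP; apply: val_inj; rewrite /= inordK; have := ltn_ord u; have := ltn_ord v; lia.
apply: leq_trans (subset_leq_card H) _.
rewrite cards2; by case: (_ != _).
Qed.

Lemma path_nbh_card n (u : 'I_n) :
  #|u |: [set v | path_graph n u v]| = (deg (path_graph n) u).+1.
Proof.
rewrite cardsU1 inE /path_graph /deg.
have -> : ((u.+1 == u :> nat) || (u.+1 == u :> nat)) = false by apply/negbTE; lia.
by [].
Qed.

Lemma cover_ge n (D : {set 'I_n}) : dominating (path_graph n) D ->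
  n <= cover_number (path_graph n) D + #|D|.
Proof.
move=> /forallP dom.
have -> : cover_number (path_graph n) D + #|D| =
   \sum_(u in D) #|u |: [set v | path_graph n u v]|.
  rewrite /cover_number -sum1_card -big_split /=.
  by apply: eq_bigr => u _; rewrite path_nbh_card addn1.
have sub : [set: 'I_n] \subset \bigcup_(u in D) (u |: [set v | path_graph n u v]).
  apply/subsetP => x _; have /orP [xD | /existsP [y /andP [yD xy]]] := dom x.
    by apply/bigcupP; exists x => //; rewrite setU11.
  apply/bigcupP; exists y => //; rewrite !inE; apply/orP; right.
  move: xy; rewrite /path_graph; lia.
rewrite -{1}(card_ord n) -cardsT; apply: leq_trans (subset_leq_card sub) _.
elim/big_rec2: _ => [|u m U _ le]; first by rewrite cards0.
by rewrite (leq_trans (leq_card_setU _ _).1) ?leq_add2l.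
Qed.

Lemma cover_le n (D : {set 'I_n}) : cover_number (path_graph n) D <= 2 * #|D|.
Proof.
rewrite /cover_number mulnC -sum_nat_const.
by apply: leq_sum => u _; apply: path_deg_le2.
Qed.

Lemma dom_number_le n : 1 <= n -> domination_number (path_graph n) <= (n + 2) %/ 3.
Proof.
case: n => [//|n] n1.
pose f (j : 'I_((n.+1 + 2) %/ 3)) : 'I_n.+1 := inord (minn (3 * j + 1) (n.+1 - 1)).
pose S := [set f j | j in 'I_((n.+1 + 2) %/ 3)].
have domS : dominating (path_graph n.+1) S.
  apply/forallP => x.
  have jlt : x %/ 3 < (n.+1 + 2) %/ 3 by have := ltn_ord x; lia.
  have yS : f (Ordinal jlt) \in S by rewrite imset_f.
  case: (eqVneq (f (Ordinal jlt)) x) => [<-|ne]; first by rewrite yS.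
  apply/orP; right; apply/existsP; exists (f (Ordinal jlt)); rewrite yS /=.
  move: ne; rewrite /path_graph -(inj_eq val_inj) /f /= inordK; last by lia.
  have := ltn_ord x; lia.
rewrite /domination_number. have := @bigmin_le _ _ (fun D : {set _} => #|D|) #|'I_n.+1| _ domS. move/leq_trans; apply.
by apply: leq_trans (leq_imset_card _ _) _; rewrite card_ord.
Qed.

Theorem mainTheorem1 (n : nat) (D : {set 'I_n}) :
  1 <= n -> gamma_set (path_graph n) D ->
  (forall k : nat, 0 < k -> n = 3 * k ->
     cover_number (path_graph n) D = 2 * k) /\
  (forall k : nat, n = 3 * k + 1 ->
     2 * k <= cover_number (path_graph n) D <= 2 * k + 2) /\
  (forall k : nat, n = 3 * k + 2 ->
     2 * k + 1 <= cover_number (path_graph n) D <= 2 * k + 2).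
Proof.
move=> n1 /andP [dom /eqP card].
have h1 := cover_ge _ _ dom.
have h2 := cover_le _ D.
have h3 := dom_number_le _ n1.
rewrite -card in h3.
move: h1 h2 h3; set c := cover_number _ _; set d := #|D|.
move=> h1 h2 h3.
split; [|split] => k hk; try move=> hn; subst n; lia.
Qed.
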